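(* Let $n,d$ be positive integers, $\mathbf{c}\in\mathbb{Z}^n_{+}$, and $\mathbb{P}\subseteq[0,d]^n$ a bounded polyhedron with $\mathbb{P}\cap\mathbb{Z}^n\neq\emptyset$. Let $\mathbf{z}^\star=(z_0,\dots,z_n)$ be a lexicographically maximum element of $\{(\mathbf{c}^\top\mathbf{x},x_1,\dots,x_n):\mathbf{x}\in\mathbb{P}\}$ and let $\mathbf{x}^\star=(x_0,\dots,x_n)$ be a lexicographically maximum element of $\{(\mathbf{c}^\top\mathbf{x},x_1,\dots,x_n):\mathbf{x}\in\mathbb{P}\cap\mathbb{Z}^n\}$. Then $$\Big(d\sum_{i=1}^n\min(0,c_i),0,\dots,0\Big)\le_L \mathbf{x}^\star\le_L \alpha(\mathbf{z}^\star).$$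
   Context: Lexicographic order on $\mathbb{R}^{n+1}$: $\mathbf{x}<_L\mathbf{y}$ if there is $k\in\{0,\dots,n\}$ with $x_k<y_k$ and $x_i=y_i$ for all $i<k$; $\mathbf{x}\le_L\mathbf{y}$ means $\mathbf{x}<_L\mathbf{y}$ or $\mathbf{x}=\mathbf{y}$. A lexicographically maximum element of a set $T$ is some $\mathbf{t}\in T$ with $\mathbf{s}\le_L\mathbf{t}$ for all $\mathbf{s}\in T$. For $\mathbf{y}=(y_0,\dots,y_n)\in\mathbb{R}\times[0,d]^n$, define the integral vector $\alpha(\mathbf{y})$ by $\alpha(\mathbf{y})_i=\lfloor y_i\rfloor$ if $i\le k$ and $\alpha(\mathbf{y})_i=d$ if $i>k$, where $k=\min\{j\in\{0,\dots,n\}: y_j\notin\mathbb{Z}\}$; if $\mathbf{y}$ is integral, $\alpha(\mathbf{y})=\mathbf{y}$. *)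

(* Defs.v *)
From HB Require Import structures.
From mathcomp Require Import all_boot all_order all_algebra.
From mathcomp Require Import reals.
Set Implicit Arguments. Unset Strict Implicit. Unset Printing Implicit Defensive.
Import Order.TTheory GRing.Theory Num.Theory.
Local Open Scope ring_scope.

Section Defs.
Variable R : realType.

Definition lexlt N (x y : 'I_N -> R) : Prop :=
  exists k : 'I_N, x k < y k /\ forall i : 'I_N, (i < k)%N -> x i = y i.
Definition lexle N (x y : 'I_N -> R) : Prop := lexlt x y \/ x = y.

Definition lexmax N (T : ('I_N -> R) -> Prop) (t : 'I_N -> R) : Prop :=
  T t /\ forall s, T s -> lexle s t.

Definition in_poly m n (A : 'M[R]_(m, n)) (b : 'cV[R]_m) (x : 'I_n -> R) : Prop :=
  forall i : 'I_m, \sum_(j < n) A i j * x j <= b i 0.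

Definition intvec n (x : 'I_n -> R) : Prop := forall i, x i \is a Num.int.

Definition cdot n (c : 'I_n -> int) (x : 'I_n -> R) : R :=
  \sum_(i < n) (c i)%:~R * x i.

(* (c^T x, x_1, ..., x_n) ; index 0 is c^T x, index j+1 is x_{j+1} *)
Definition ext n (c : 'I_n -> int) (x : 'I_n -> R) : 'I_n.+1 -> R :=
  fun i => if unlift ord0 i is Some j then x j else cdot c x.

(* alpha(y): k = min index with y_k non-integral (k = n+1 if none) *)
Definition alpha_k n (y : 'I_n.+1 -> R) : nat :=
  \big[minn/n.+1]_(j : 'I_n.+1 | y j \isn't a Num.int) (j : nat).
Definition alpha n (d : nat) (y : 'I_n.+1 -> R) : 'I_n.+1 -> R :=
  fun i => if (i <= alpha_k y)%N then (Num.floor (y i))%:~R else d%:R.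

Definition lowvec n (d : nat) (c : 'I_n -> int) : 'I_n.+1 -> R :=
  fun i => if i == ord0 then d%:R * \sum_(j < n) (Num.min 0 (c j))%:~R else 0.
End Defs.

(* Main.v *)
Require Import Defs.
From HB Require Import structures.
From mathcomp Require Import all_boot all_order all_algebra.
From mathcomp Require Import reals.
From Stdlib Require Import FunctionalExtensionality.
Import Order.TTheory GRing.Theory Num.Theory.
Local Open Scope ring_scope.

Lemma pw_lexle (R : realType) N (v w : 'I_N -> R) :
  (forall i, v i <= w i) -> lexle v w.
Proof.
move=> H.
case: (boolP [exists i, v i != w i]) => [/existsP [i0 Hi0]|].
  left.
  case: (@arg_minnP _ i0 (fun i => v i != w i) (fun i : 'I_N => i : nat) Hi0) => k Hk Hmin.
  exists k; split.
    by rewrite lt_neqAle Hk H.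
  move=> i Hik; apply/eqP; apply/negPn/negP => Hne.
  by have := Hmin i Hne; rewrite leqNgt Hik.
move/existsPn => He; right; apply: functional_extensionality => i.
by have := He i; rewrite negbK => /eqP.
Qed.

Lemma bigminn_le (I : eqType) (r : seq I) (P : pred I) (F : I -> nat) x0 i :
  i \in r -> P i -> (\big[minn/x0]_(j <- r | P j) F j <= F i)%N.
Proof.
elim: r => [//|a r IH]; rewrite inE big_cons => /orP [/eqP <-|Hr] Pi.
  by rewrite Pi geq_minl.
case: (P a) => //; first apply: leq_trans (geq_minr _ _) _; exact: IH.
Qed.

Lemma alpha_k_int (R : realType) n (y : 'I_n.+1 -> R) (i : 'I_n.+1) :
  (i < alpha_k y)%N -> y i \is a Num.int.
Proof.
move=> Hi; apply/negPn/negP => Hn.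
have : (alpha_k y <= i)%N.
  by rewrite /alpha_k; apply: (@bigminn_le _ (index_enum _) (fun j : 'I_n.+1 => y j \isn't a Num.int) (fun j : 'I_n.+1 => nat_of_ord j) n.+1 i) => //; rewrite mem_index_enum.
by rewrite leqNgt Hi.
Qed.

Lemma int_alpha (R : realType) n (d : nat) (v y : 'I_n.+1 -> R) :
  (forall i, v i \is a Num.int) ->
  (forall i : 'I_n.+1, i != ord0 -> v i <= d%:R) ->
  lexle v y -> lexle v (alpha d y).
Proof.
move=> Hint Hd Hle.
have Hfl : forall x : R, x \is a Num.int -> (Num.floor x)%:~R = x.
  by move=> x; rewrite intrEfloor => /eqP.
have Hup : forall i : 'I_n.+1, (alpha_k y < i)%N -> v i <= alpha d y i.
  move=> i Hi; rewrite /alpha leqNgt Hi /=; apply: Hd.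
  by apply/eqP => E; rewrite E in Hi.
case: Hle => [[j [Hj Heq]]|E].
- case: (ltnP j (alpha_k y)) => Hjk.
  + left; exists j; split.
      rewrite /alpha ltnW // Hfl //; exact: alpha_k_int.
    move=> i Hij.
    have Hik : (i < alpha_k y)%N by apply: ltn_trans Hij Hjk.
    rewrite /alpha ltnW // Hfl ?Heq //; exact: alpha_k_int.
  + apply: pw_lexle => i.
    case: (ltngtP i (alpha_k y)) => Hik.
    * have Hij : (i < j)%N by apply: leq_trans Hik Hjk.
      rewrite /alpha ltnW // Hfl ?Heq //; exact: alpha_k_int.
    * exact: Hup.
    * rewrite /alpha Hik leqnn.
      have Hvi : v i <= y i.
        case: (ltngtP i j) => Hij.
        - by rewrite Heq.
        - by move: Hjk; rewrite -Hik leqNgt Hij.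
        - have -> : i = j by apply: val_inj.
          exact: ltW.
      have := Hint i; rewrite intrEfloor => /eqP E.
      rewrite -E ler_int floor_ge_int E //.
- apply: pw_lexle => i.
  case: (leqP i (alpha_k y)) => Hik.
  + by rewrite /alpha Hik Hfl -E.
  + exact: Hup.
Qed.

Theorem lemma1 (R : realType) (n d m : nat) (c : 'I_n -> int)
    (A : 'M[R]_(m, n)) (b : 'cV[R]_m) (zs xs : 'I_n.+1 -> R) :
  (0 < n)%N -> (0 < d)%N ->
  (forall i, 0 <= c i) ->
  (forall x, in_poly A b x -> forall i, 0 <= x i <= d%:R) ->
  (exists x, in_poly A b x /\ intvec x) ->
  lexmax (fun y => exists x, in_poly A b x /\ y = ext c x) zs ->
  lexmax (fun y => exists x, in_poly A b x /\ intvec x /\ y = ext c x) xs ->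
  lexle (lowvec R d c) xs /\ lexle xs (alpha d zs).
Proof.
move=> _ _ Hc Hbd _ [_ Hz] [[x [Hx [Hxi ->]]] _].
split.
- apply: pw_lexle => i.
  rewrite /lowvec /ext.
  case: (unliftP ord0 i) => [j ->|->] /=.
    by case/andP: (Hbd x Hx j).
  rewrite ?eqxx.
  have -> : \sum_(j < n) (Num.min 0 (c j))%:~R = 0 :> R.
    by apply: big1 => j _; rewrite (@min_l _ _ 0 (c j)) ?Hc.
  rewrite mulr0 /cdot; apply: sumr_ge0 => j _.
  apply: mulr_ge0; first by rewrite ler0z.
  by case/andP: (Hbd x Hx j).
- apply: int_alpha.
  + move=> i; rewrite /ext; case: (unliftP ord0 i) => [j _|_] //=.
    rewrite /cdot; apply: rpred_sum => j _; apply: rpredM => //.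
    exact: rpred_int.
  + move=> i Hi; rewrite /ext; case: (unliftP ord0 i) => [j _|E] /=.
      by case/andP: (Hbd x Hx j).
    by rewrite E eqxx in Hi.
  + apply: Hz; by exists x.
Qed.
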